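(* For the iterates of ARDCA (context) and every $k\ge0$, $$u^{k+1}=\frac{\theta_k}{\theta_0}z^{k+1}+\theta_k\sum_{t=1}^k\left(\frac{\theta_t(1-\theta_0)^{k-t}}{\theta_{t-1}^2}-\frac{(1-\theta_0)^{k+1-t}}{\theta_{t-1}}\right)u^t,$$ where each coefficient $\frac{\theta_t(1-\theta_0)^{k-t}}{\theta_{t-1}^2}-\frac{(1-\theta_0)^{k+1-t}}{\theta_{t-1}}$ ($1\le t\le k$) is positive and $$\frac{\theta_k}{\theta_0}+\theta_k\sum_{t=1}^k\left(\frac{\theta_t(1-\theta_0)^{k-t}}{\theta_{t-1}^2}-\frac{(1-\theta_0)^{k+1-t}}{\theta_{t-1}}\right)=1.$$
   Context: $\widehat n\ge1$ is an integer; $\theta_0=1/\widehat n$, $\theta_{k+1}=\frac{\sqrt{\theta_k^4+4\theta_k^2}-\theta_k^2}{2}$ (so $\frac{1-\theta_k}{\theta_k^2}=\frac1{\theta_{k-1}^2}$, with convention $1/\theta_{-1}^2=\widehat n^2-\widehat n$). ARDCA generates vectors in $\mathbb{R}^{\widehat n}$ by: $z^0=u^0$; for $k\ge0$, $v^k=\theta_kz^k+(1-\theta_k)u^k$; $z^{k+1}$ differs from $z^k$ in at most one coordinate $i_k$ (chosen at random, with $z^{k+1}_{i_k}$ given by a coordinate proximal step on the dual objective); $u^{k+1}=v^k+\widehat n\theta_k(z^{k+1}-z^k)$. (The identity only uses the relations $z^0=u^0$, $v^k=\theta_kz^k+(1-\theta_k)u^k$, $u^{k+1}=v^k+\widehat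 n\theta_k(z^{k+1}-z^k)$ and the definition of $\theta_k$.) *)

(* Defs.v *)
From HB Require Import structures.
From mathcomp Require Import all_boot all_order all_algebra.
From mathcomp Require Import reals.
Set Implicit Arguments. Unset Strict Implicit. Unset Printing Implicit Defensive.
Import Order.TTheory GRing.Theory Num.Theory.
Local Open Scope ring_scope.

Fixpoint ardca_theta (R : realType) (nhat : nat) (k : nat) : R :=
  match k with
  | O => 1 / nhat%:R
  | S k' => let th := ardca_theta R nhat k' in
            (Num.sqrt (th ^+ 4 + 4 * th ^+ 2) - th ^+ 2) / 2
  end.

Definition ardca_coef (R : realType) (nhat k t : nat) : R :=
  let th := ardca_theta R nhat in
  th t * (1 - th 0%N) ^+ (k - t) / (th t.-1) ^+ 2
  - (1 - th 0%N) ^+ (k.+1 - t) / th t.-1.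

Definition ardca_iterates (R : realType) (nhat : nat)
    (z u v : nat -> 'rV[R]_nhat) : Prop :=
  let th := ardca_theta R nhat in
  z 0%N = u 0%N /\
  (forall k, v k = th k *: z k + (1 - th k) *: u k) /\
  (forall k, exists i : 'I_nhat, forall j : 'I_nhat, j != i -> z k.+1 0 j = z k 0 j) /\
  (forall k, u k.+1 = v k + (nhat%:R * th k) *: (z k.+1 - z k)).

(* Main.v *)
Require Import Defs.
From HB Require Import structures.
From mathcomp Require Import all_boot all_order all_algebra.
From mathcomp Require Import reals.
From mathcomp Require Import ring lra.
Import Order.TTheory GRing.Theory Num.Theory.
Local Open Scope ring_scope.

Arguments ardca_theta : simpl never.

Section Aux.
Variable R : realType.
Variable nhat : nat.
Hypothesis hn : (1 <= nhat)%N.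
Local Notation th := (ardca_theta R nhat).

Lemma th0E : th 0 = 1 / nhat%:R.
Proof. by []. Qed.

Lemma thSE k : th k.+1 = (Num.sqrt (th k ^+ 4 + 4 * th k ^+ 2) - th k ^+ 2) / 2.
Proof. by []. Qed.

Lemma th_bounds k : 0 < th k <= 1.
Proof.
elim: k => [|k /andP [h0 h1]].
  rewrite th0E; have hN : 1 <= nhat%:R :> R by rewrite ler1n.
  apply/andP; split; first by rewrite divr_gt0 // ltr0n.
  by rewrite ler_pdivrMr ?mul1r // ltr0n.
rewrite thSE.
set X := th k ^+ 2.
have hX : 0 < X by rewrite exprn_gt0.
have e4 : th k ^+ 4 = X * X by rewrite /X -exprD.
rewrite e4.
set s := Num.sqrt _.
have hs0 : 0 <= s by apply: sqrtr_ge0.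
have hs2 : s ^+ 2 = X * X + 4 * X.
  by rewrite sqr_sqrtr //; nra.
have hsX : X < s by nra.
set y := (s - X) / 2.
have hy : y * y + X * y = X by rewrite /y; nra.
have y0 : 0 < y by rewrite /y; lra.
apply/andP; split=> //.
nra.
Qed.

Lemma th_pos k : 0 < th k.
Proof. by case/andP: (th_bounds k). Qed.

Lemma th_le1 k : th k <= 1.
Proof. by case/andP: (th_bounds k). Qed.

Lemma th_rec k : th k.+1 ^+ 2 = (1 - th k.+1) * th k ^+ 2.
Proof.
have := th_pos k; have := th_pos k.+1.
rewrite thSE.
set X := th k ^+ 2.
have e4 : th k ^+ 4 = X * X by rewrite /X -exprD.
rewrite e4.
have hX : 0 < X by rewrite exprn_gt0 ?th_pos.
set s := Num.sqrt _.
have hs0 : 0 <= s by apply: sqrtr_ge0.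
have hs2 : s ^+ 2 = X * X + 4 * X.
  by rewrite sqr_sqrtr //; nra.
move=> _ _; nra.
Qed.

Lemma th_decr k : th k.+1 < th k.
Proof.
have h := th_rec k; have p1 := th_pos k.+1; have p0 := th_pos k.
have l1 := th_le1 k.+1.
have hsq : th k.+1 ^+ 2 < th k ^+ 2.
  by rewrite h gtr_pMl ?exprn_gt0 // ltrBlDr ltrDl.
by rewrite -(ltr_pXn2r (isT : (0 < 2)%N)) // ?ltW // nnegrE ltW.
Qed.

Lemma th_lt0 t : (1 <= t)%N -> th t < th 0.
Proof.
case: t => // t _; elim: t => [|t IH]; first exact: th_decr.
exact: lt_trans (th_decr _) IH.
Qed.

Lemma coef_step k t : (t <= k)%N ->
  ardca_coef R nhat k.+1 t = (1 - th 0) * ardca_coef R nhat k t.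
Proof.
move=> htk; rewrite /ardca_coef.
rewrite (subSn htk) (subSn (leqW htk)) (subSn htk) !exprS.
by rewrite mulrBr !mulrA; congr (_ - _); rewrite ?[th t * _]mulrC ?mulrA.
Qed.

Lemma coef_diag k :
  ardca_coef R nhat k.+1 k.+1 = th k.+1 / th k ^+ 2 - (1 - th 0) / th k.
Proof.
by rewrite /ardca_coef subnn subSnn expr0 expr1 mulr1.
Qed.

End Aux.

Theorem lemma9 (R : realType) (nhat : nat) (z u v : nat -> 'rV[R]_nhat) :
  (1 <= nhat)%N ->
  ardca_iterates z u v ->
  forall k : nat,
    u k.+1 = (ardca_theta R nhat k / ardca_theta R nhat 0) *: z k.+1
             + ardca_theta R nhat k *: \sum_(1 <= t < k.+1) ardca_coef R nhat k t *: u t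
    /\ ((2 <= nhat)%N -> forall t : nat, (1 <= t <= k)%N -> 0 < ardca_coef R nhat k t)
    /\ ardca_theta R nhat k / ardca_theta R nhat 0
       + ardca_theta R nhat k * \sum_(1 <= t < k.+1) ardca_coef R nhat k t = 1.
Proof.
move=> hn [hz0 [hv [_ hu]]] k.
have x0p := th_pos R nhat hn 0.
have hN : nhat%:R = 1 / ardca_theta R nhat 0 :> R.
  rewrite th0E; have : nhat%:R != 0 :> R by rewrite pnatr_eq0 -lt0n.
  by move=> h; field.
split; last split.
- elim: k => [|k IH].
    rewrite big_geq // scaler0 addr0 divff ?gt_eqF //.
    rewrite scale1r hu hv hz0 hN.
    apply/rowP => j; rewrite !mxE.
    by field; rewrite !gt_eqF //.
  rewrite big_nat_recr //=.
  rewrite (eq_big_nat _ _ (F2 := fun t => (1 - ardca_theta R nhat 0) *: (ardca_coef R nhat k t *: u t))); last first.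
    by move=> t /andP [_ ht]; rewrite coef_step // scalerA.
  rewrite -scaler_sumr coef_diag.
  move: IH; set S := \sum_(_ <= _ < _) _ => IH.
  rewrite hu hv hN.
  have xkp := th_pos R nhat hn k.
  have E := th_rec R nhat hn k.
  apply/rowP => j.
  have := congr1 (fun M : 'rV[R]_nhat => M 0 j) IH; rewrite !mxE => IHj.
  rewrite ?mxE.
  set x0 := ardca_theta R nhat 0 in IHj x0p *.
  set xk := ardca_theta R nhat k in IHj xkp E *.
  set x1 := ardca_theta R nhat k.+1 in E *.
  have hS : S 0 j = (u k.+1 0 j - xk / x0 * z k.+1 0 j) / xk.
    by rewrite IHj; field; rewrite !gt_eqF //.
  have E' : 1 - x1 = x1 ^+ 2 / xk ^+ 2.
    by rewrite E; field; rewrite !gt_eqF //.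
  rewrite hS E'.
  by field; rewrite !gt_eqF //.
- move=> hn2 t /andP [ht1 htk].
  rewrite /ardca_coef (subSn htk).
  have a0 : 0 < 1 - ardca_theta R nhat 0.
    rewrite th0E subr_gt0 ltr_pdivrMr ?ltr0n ?mul1r; last by apply: leq_trans hn2.
    by rewrite ltr1n.
  case: t ht1 htk => // t _ htk /=.
  have E := th_rec R nhat hn t.
  have lt0 := th_lt0 R nhat hn t.+1 isT.
  have l1 := th_le1 R nhat hn 0.
  have yp := th_pos R nhat hn t.
  have xp := th_pos R nhat hn t.+1.
  move: a0 E lt0 l1 yp xp.
  set a := 1 - _; set x0 := ardca_theta R nhat 0; set y := ardca_theta R nhat t;
  set x := ardca_theta R nhat t.+1 => a0 E lt0 l1 yp xp.
  have key : a * y < x.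
    have x0q : 0 < x0 by exact: lt_trans xp lt0.
    have hm : 0 <= a * x0 by rewrite mulr_ge0 // ltW.
    have ha2 : a ^+ 2 < 1 - x.
      have -> : a ^+ 2 = a - a * x0.
        by rewrite /a /x0; ring.
      have ha : a = 1 - x0 by [].
      lra.
    have hsq : (a * y) ^+ 2 < x ^+ 2.
      by rewrite E exprMn ltr_pM2r ?exprn_gt0.
    have ayp : 0 < a * y by rewrite mulr_gt0.
    rewrite !expr2 in hsq; nra.
  have -> : x * a ^+ (k - t.+1) / y ^+ 2 - a ^+ (k - t.+1).+1 / y
          = a ^+ (k - t.+1) * ((x - a * y) / y ^+ 2).
    by rewrite [a ^+ (_.+1)]exprS; field; rewrite !gt_eqF //.
  by rewrite mulr_gt0 ?exprn_gt0 // divr_gt0 ?subr_gt0 ?exprn_gt0.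
- elim: k => [|k IH].
    by rewrite big_geq // mulr0 addr0 divff ?gt_eqF.
  rewrite big_nat_recr //=.
  rewrite (eq_big_nat _ _ (F2 := fun t => (1 - ardca_theta R nhat 0) * ardca_coef R nhat k t)); last first.
    by move=> t /andP [_ ht]; rewrite coef_step.
  rewrite -mulr_sumr coef_diag.
  move: IH; set S := \sum_(_ <= _ < _) _ => IH.
  have xkp := th_pos R nhat hn k.
  have E := th_rec R nhat hn k.
  set x0 := ardca_theta R nhat 0 in IH x0p *.
  set xk := ardca_theta R nhat k in IH xkp E *.
  set x1 := ardca_theta R nhat k.+1 in E *.
  have hS : S = (1 - xk / x0) / xk.
    by rewrite -IH; field; rewrite !gt_eqF //.
  have E' : 1 - x1 = x1 ^+ 2 / xk ^+ 2 by rewrite E; field; rewrite !gt_eqF //.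
  rewrite hS.
  have -> : x1 * ((1 - x0) * ((1 - xk / x0) / xk) + (x1 / xk ^+ 2 - (1 - x0) / xk))
          = x1 * (1 - 1/x0) + x1 ^+ 2 / xk ^+ 2 by field; rewrite !gt_eqF //.
  rewrite -E'; field; rewrite !gt_eqF //.
Qed.
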